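(* Let $H$ be a binary tree based graph and let $S$ be a guarded set of literals over variables of $\phi_H$. Then $\Pr({\bf EC}(S))=2^{-|S\setminus Fix(S)|}$.
   Context: Sets of literals never contain a variable together with its negation. A rooted tree is extended if none of its leaves has a sibling. A graph $H$ is a binary tree based graph if it is the edge-disjoint union of extended rooted trees $T_1,\dots,T_m$ with roots $t_1,\dots,t_m$ such that every leaf of some $T_i$ is a leaf of exactly two of the trees, and any two trees have at most one common vertex, which is a leaf of both. $T_i,T_j$ are adjacent if they share a leaf $\ell_{i,j}$; $P_{i,j}$ is the path between $t_i$ and $t_j$ in $T_i\cup T_j$. A pseudoedge is a pair $\{t_i,t_j\}$ with $T_i,T_j$ adjacent. $\phi_H$ is the CNF on variables $V(H)$ with a clause $C_{i,j}$ (positive literals of $V(P_{i,j})$) for each pseudoedge; the non-leaf variables of $C_{i,j}$ are its variables other than $\ell_{i,j}$. A set $S$ of literals is guarded from $C_{i,j}$ if (1) $\ell_{i,j}$ does not occur in $S$, or (2) some non-leaf variable of $C_{i,j}$ occurs positively in $S$, or (3) $\ell_{i,j}$ occurs positively in $S$ and all other variables of $C_{i,j}$ occur negatively in $S$; $S$ is guarded if it is guarded from every clause of $\phi_H$. The positive literal $\ell_{i,j}$ is fixed w.r.t. $S$ if $\ell_{i,j}\in S$ and all other variables of $C_{i,j}$ occur negatively in $S$; $Fix(S)$ is the set of fixed literals. ${\bf SAT}(H)$ is the set of satisfying assignments of $\phi_H$; each $S'\in{\bf SAT}(H)$ has probability $(1/2)^{|V(H)\setminus Fix(S')|}$. ${\bf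 EC}(S)=\{S'\in{\bf SAT}(H):S\subseteq S'\}$. *)

(* Defs.v *)
From HB Require Import structures.
From mathcomp Require Import all_boot all_order all_algebra.
Set Implicit Arguments. Unset Strict Implicit. Unset Printing Implicit Defensive.
Import Order.TTheory GRing.Theory Num.Theory.

(* A binary tree based graph H on vertex type V is given by
   m trees T_i, each described by its (symmetric) edge relation E i : rel V and
   its root t i.  V(H) = V (every vertex lies in some tree), and the edge set
   of H is the (edge-disjoint) union of the E i. *)

Section BTBG.
Variables (V : finType) (m : nat) (E : 'I_m -> rel V) (t : 'I_m -> V).

Definition on_path (e : rel V) (a b v : V) : bool :=
  [exists n : 'I_#|V|, exists p : n.-tuple V,
     [&& path e a p, last a p == b, uniq (a :: p) & v \in a :: p]].

Definition has_cycle (e : rel V) : bool :=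
  [exists n : 'I_#|V|.+1, exists c : n.-tuple V,
     [&& 2 < n, uniq c & cycle e c]].

Definition VT (i : 'I_m) : {set V} :=
  [set v | (v == t i) || [exists w, E i v w]].

Definition is_tree (i : 'I_m) : Prop :=
  [/\ symmetric (E i), irreflexive (E i),
      {in VT i &, forall v w, connect (E i) v w} & ~~ has_cycle (E i)].

Definition child (i : 'I_m) (p w : V) : bool :=
  E i p w && on_path (E i) w (t i) p.

Definition leaf (i : 'I_m) (v : V) : bool :=
  [&& v \in VT i, v != t i & [forall w, ~~ child i v w]].

Definition extended (i : 'I_m) : Prop :=
  forall l, leaf i l -> forall p w, child i p l -> child i p w -> w = l.

Definition binary_tree_based : Prop :=
  [/\ forall i, is_tree i /\ extended i,
      forall i j, i != j -> forall x y, ~~ (E i x y && E j x y),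
      forall v, exists i, v \in VT i,
      forall i v, leaf i v -> #|[set j | leaf j v]| = 2 &
      forall i j, i != j ->
        (forall v, v \in VT i -> v \in VT j -> leaf i v && leaf j v) /\
        (forall v w, v \in VT i :&: VT j -> w \in VT i :&: VT j -> v = w)].

(* variables of the clause C_{i,j}: vertices of the path P_{i,j} between t_i
   and t_j in T_i \cup T_j *)
Definition Cvars (i j : 'I_m) : {set V} :=
  [set v | on_path (fun x y => E i x y || E j x y) (t i) (t j) v].

Definition pseudo (i j : 'I_m) (l : V) : bool :=
  [&& i != j, leaf i l & leaf j l].

(* literals: (v, true) is the positive literal v, (v, false) its negation *)
Definition consistent (S : {set V * bool}) : Prop :=
  forall v, ~~ (((v, true) \in S) && ((v, false) \in S)).

Definition guarded_from (S : {set V * bool}) (i j : 'I_m) (l : V) : bool :=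
  [|| ((l, true) \notin S) && ((l, false) \notin S),
      [exists v in Cvars i j, (v != l) && ((v, true) \in S)]
    | ((l, true) \in S) &&
      [forall v in Cvars i j, (v != l) ==> ((v, false) \in S)]].

Definition guarded (S : {set V * bool}) : Prop :=
  forall i j l, pseudo i j l -> guarded_from S i j l.

Definition Fix (S : {set V * bool}) : {set V * bool} :=
  [set x : V * bool | [&& x.2, x \in S &
     [exists i, exists j, pseudo i j x.1 &&
        [forall v in Cvars i j, (v != x.1) ==> ((v, false) \in S)]]]].

Definition lits (a : {ffun V -> bool}) : {set V * bool} :=
  [set x : V * bool | a x.1 == x.2].

Definition sat (a : {ffun V -> bool}) : bool :=
  [forall i, forall j, forall l, pseudo i j l ==> [exists v in Cvars i j, a v]].

Local Open Scope ring_scope.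

(* probability of S' = lits a : (1/2)^|V(H) \ Fix(S')| *)
Definition weight (a : {ffun V -> bool}) : rat :=
  (2%:R^-1) ^+ #|[set v : V | (v, true) \notin Fix (lits a)]|.

Definition PrEC (S : {set V * bool}) : rat :=
  \sum_(a : {ffun V -> bool} | sat a && (S \subset lits a)) weight a.

End BTBG.

(* Main.v *)
Require Import Defs.
From HB Require Import structures.
From mathcomp Require Import all_boot all_order all_algebra.
Import Order.TTheory GRing.Theory Num.Theory.
Set Implicit Arguments. Unset Strict Implicit. Unset Printing Implicit Defensive.

Lemma uniq_size_card (V : finType) (s : seq V) : uniq s -> size s <= #|V|.
Proof. by move/card_uniqP <-; apply: max_card. Qed.

Lemma on_pathI (V : finType) (e : rel V) a b s v :
  path e a s -> last a s = b -> uniq (a :: s) -> v \in a :: s -> on_path e a b v.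
Proof.
move=> Hp Hl Hu Hv.
have Hs : size s < #|V| by have := uniq_size_card Hu.
apply/existsP; exists (Ordinal Hs); apply/existsP; exists (in_tuple s).
by apply/and4P; split => //; rewrite Hl.
Qed.

Lemma on_pathE (V : finType) (e : rel V) a b v : on_path e a b v ->
  exists s, [/\ path e a s, last a s = b, uniq (a :: s) & v \in a :: s].
Proof.
case/existsP => n /existsP [p /and4P [H1 /eqP H2 H3 H4]].
by exists (tval p).
Qed.

Lemma nbrs (T : eqType) (e : rel T) a s v : path e a s -> uniq (a :: s) ->
  v \in s -> v != last a s -> exists u x, [/\ e u v, e v x & u != x].
Proof.
move=> Hp Hu Hv; case/splitPr: Hv Hp Hu => s1 s2.
rewrite cat_path => /andP [_ /= /andP [Huv Hps2]].
case: s2 Hps2 => [|x s2]; first by rewrite last_cat /= eqxx.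
move=> /andP [Hvx _] Hu _; exists (last a s1), x; split => //.
move: Hu; change (uniq ((a :: s1) ++ [:: v, x & s2]) -> last a s1 != x); rewrite cat_uniq => /and3P [_ Hdis _].
apply/negP => /eqP Hux; move/hasPn: Hdis => /(_ x); rewrite !inE eqxx orbT.
move/(_ isT); rewrite -Hux; have := mem_last a s1; rewrite inE => -> .
 by [].
Qed.

Section G.
Variables (V : finType) (m : nat) (E : 'I_m -> rel V) (t : 'I_m -> V).

Lemma VT_edge i x y : E i x y -> x \in VT E t i.
Proof. by move=> Hxy; rewrite inE; apply/orP; right; apply/existsP; exists y. Qed.

Lemma root_VT i : t i \in VT E t i.
Proof. by rewrite inE eqxx. Qed.

Lemma path_VT i x s : symmetric (E i) -> path (E i) x s -> {subset s <= VT E t i}.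
Proof.
move=> Hsym; elim: s x => [|y s IH] x //= /andP [Hxy Hp] z.
rewrite inE => /orP [/eqP -> | Hz]; last exact: IH Hp z Hz.
by apply: (@VT_edge i y x); rewrite Hsym.
Qed.

Lemma path_VT2 i j x s : symmetric (E i) -> symmetric (E j) ->
  path (fun x y => E i x y || E j x y) x s ->
  forall z, z \in s -> (z \in VT E t i) || (z \in VT E t j).
Proof.
move=> Hi Hj; elim: s x => [|y s IH] x //= /andP [Hxy Hp] z.
rewrite inE => /orP [/eqP -> | Hz]; last exact: IH Hp z Hz.
case/orP: Hxy => H.
  by rewrite (@VT_edge i y x) // Hi.
by rewrite (@VT_edge j y x) ?orbT // Hj.
Qed.

Lemma leaf_nbr i w u x : is_tree E t i -> leaf E t i w -> E i w u -> E i w x -> u = x.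
Proof.
case=> Hsym Hirr Hconn Hcyc /and3P [Hw Hwt /forallP Hnc].
have /connectP [p Hp Hl] := Hconn _ _ Hw (root_VT i).
move: Hl; case: (shortenP Hp) => q Hq Hu _ Hl.
case: q Hq Hu Hl => [|y q] Hq Hu Hl; first by move: Hwt; rewrite Hl /= eqxx.
suff key : forall z, E i w z -> z = y by move=> /key -> /key ->.
move=> z Hz; apply/eqP/negPn/negP => Hzy.
case Hzq: (z \in q).
  case/splitPr: Hzq Hq Hu Hl => q1 q2 Hq Hu Hl.
  have Hc : cycle (E i) (w :: y :: rcons q1 z).
    change (path (E i) w (rcons (rcons (y :: q1) z) w)); rewrite !rcons_path last_rcons.
    move: Hq; rewrite -[y :: _ ++ _]/((y :: q1) ++ z :: q2) cat_path => /andP [-> /= /andP [-> _]].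
    by rewrite Hsym Hz.
  have Huc : uniq (w :: y :: rcons q1 z).
    move: Hu; rewrite -cat_rcons.
    by rewrite -[w :: y :: (_ ++ _)]/((w :: y :: rcons q1 z) ++ q2) cat_uniq => /andP [].
  have Hs : size (w :: y :: rcons q1 z) < #|V|.+1 by rewrite ltnS uniq_size_card.
  move/negP: Hcyc; apply; apply/existsP; exists (Ordinal Hs); apply/existsP.
  exists (in_tuple (w :: y :: rcons q1 z)).
  by apply/and3P; split => //=; rewrite size_rcons.
have Hch : child E t i w z.
  rewrite /child Hz /=.
  apply: (@on_pathI _ _ z (t i) (w :: y :: q)).
  - by rewrite /= Hsym Hz.
  - by rewrite Hl.
  - rewrite cons_uniq Hu andbT !inE negb_or Hzq orbF Hzy andbT.
    by apply/eqP => Hzw; move: Hz; rewrite Hzw Hirr.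
  - by rewrite !inE eqxx orbT.
by move: (Hnc z); rewrite Hch.
Qed.

Hypothesis HB : binary_tree_based E t.

Lemma leaf_VT i v : leaf E t i v -> v \in VT E t i.
Proof. by case/and3P. Qed.

Lemma leaf_any k x w : leaf E t k w -> w \in VT E t x -> leaf E t x w.
Proof.
case: HB => _ _ _ _ Hsh Hk Hx.
case: (eqVneq k x) => [<- //|Hkx].
by case: (Hsh k x Hkx) => /(_ w (leaf_VT Hk) Hx) /andP [].
Qed.

Lemma pseudo_Cvars i j l : pseudo E t i j l -> l \in Cvars E t i j.
Proof.
case: HB => Htr _ _ _ Hsh /and3P [Hij Hli Hlj].
case: (Htr i) => [[Hsi _ Hci _] _]; case: (Htr j) => [[Hsj _ Hcj _] _].
have /connectP [p Hp Hl] := Hci _ _ (root_VT i) (leaf_VT Hli).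
move: Hl; case: (shortenP Hp) => q Hq Hu _ Hl.
have /connectP [p' Hp' Hl'] := Hcj _ _ (leaf_VT Hlj) (root_VT j).
move: Hl'; case: (shortenP Hp') => r Hr Hur _ Hl'.
rewrite inE; apply: (@on_pathI _ _ _ _ (q ++ r)).
- rewrite cat_path -Hl; apply/andP; split.
    by apply: sub_path Hq => x y ->.
  by apply: sub_path Hr => x y ->; rewrite orbT.
- by rewrite last_cat -Hl.
- rewrite -cat_cons cat_uniq Hu /=; move: Hur => /= /andP [Hlr ->]; rewrite andbT.
  apply/hasPn => x Hxr; apply/negP => Hxq.
  have HxVj : x \in VT E t j by apply: (path_VT Hsj Hr).
  have HxVi : x \in VT E t i.
    move: Hxq; rewrite inE => /orP [/eqP -> | Hxq]; first exact: root_VT.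
    exact: (path_VT Hsi Hq).
  case: (Hsh i j Hij) => _ /(_ x l) Heq.
  have Hxl : x = l by apply: Heq; rewrite inE ?HxVi ?HxVj // (leaf_VT Hli) (leaf_VT Hlj).
  by move: Hlr; rewrite -Hxl Hxr.
- by rewrite -cat_cons mem_cat Hl mem_last.
Qed.

Lemma Cvars_nonleaf i j l w k k' : pseudo E t i j l -> w \in Cvars E t i j ->
  w != l -> ~~ pseudo E t k k' w.
Proof.
move=> Hp Hw Hwl; apply/negP => /and3P [_ Hkw _].
case: (HB) => Htr _ _ _ Hsh.
case/and3P: Hp => Hij Hli Hlj.
case: (Htr i) => [[Hsi _ _ _] _]; case: (Htr j) => [[Hsj _ _ _] _].
move: Hw; rewrite inE => /on_pathE [s [Hs Hl Hu Hws]].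
have HIJ : ~~ ((w \in VT E t i) && (w \in VT E t j)).
  apply/negP => /andP [Hwi Hwj].
  case: (Hsh i j Hij) => _ /(_ w l) Heq.
  by move: Hwl; rewrite Heq ?eqxx // inE ?Hwi ?Hwj // (leaf_VT Hli) (leaf_VT Hlj).
have key : forall a, leaf E t a w -> w != t i -> w != t j ->
    (forall y, E i w y || E j w y -> E a w y) -> False.
  move=> a Ha Hwti Hwtj Hedge.
  have Hws' : w \in s by move: Hws; rewrite inE (negbTE Hwti).
  have Hne : w != last (t i) s by rewrite Hl.
  have [u [x [Hu1 Hx1 Hux]]] := nbrs Hs Hu Hws' Hne.
  have Hua : E a w u by apply: Hedge; rewrite Hsi Hsj.
  have Hxa : E a w x by apply: Hedge.
  case: (Htr a) => [Hta _].
  by move/eqP: Hux; apply; apply: (leaf_nbr Hta Ha).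
have : (w \in VT E t i) || (w \in VT E t j).
  move: Hws; rewrite inE => /orP [/eqP -> | Hws]; first by rewrite root_VT.
  exact: path_VT2 Hsi Hsj Hs w Hws.
case/orP => [Hwi | Hwj].
- have Hwj : w \notin VT E t j by move: HIJ; rewrite Hwi.
  have Hl' := leaf_any Hkw Hwi.
  apply: (key i Hl').
  + by case/and3P: Hl'.
  + by apply/eqP => Heq; move: Hwj; rewrite Heq root_VT.
  + move=> y /orP [// | Hy]; by move: Hwj; rewrite (VT_edge Hy).
- have Hwi : w \notin VT E t i by move: HIJ; rewrite Hwj andbT.
  have Hl' := leaf_any Hkw Hwj.
  apply: (key j Hl').
  + by apply/eqP => Heq; move: Hwi; rewrite Heq root_VT.
  + by case/and3P: Hl'.
  + move=> y /orP [Hy | //]; by move: Hwi; rewrite (VT_edge Hy).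
Qed.

End G.
Section A.
Variables (V : finType) (m : nat) (E : 'I_m -> rel V) (t : 'I_m -> V).
Local Open Scope ring_scope.

Definition upd (a : {ffun V -> bool}) (l : V) (b : bool) : {ffun V -> bool} :=
  [ffun x => if x == l then b else a x].

Lemma updE a l b x : upd a l b x = if x == l then b else a x.
Proof. by rewrite ffunE. Qed.

Lemma step (l : V) (G : {ffun V -> bool} -> rat)
  (h : bool -> {ffun V -> bool} -> rat) c :
  (forall a b, G (upd a l b) = G a) -> (forall a b b', h b (upd a l b') = h b a) ->
  (forall a, G a != 0 -> h true a + h false a = c) ->
  \sum_a G a * h (a l) a = c / 2%:R * \sum_a G a.
Proof.
move=> HG Hh Hc.
pose flip := fun a => upd a l (~~ a l).
have flipK : involutive flip.
  move=> a; apply/ffunP => x; rewrite /flip !updE eqxx negbK.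
  by case: eqP => // ->.
have E1 : \sum_a G a * h (a l) a = \sum_a G a * h (~~ a l) a.
  rewrite (reindex_inj (inv_inj flipK)); apply: eq_bigr => a _.
  by rewrite /flip HG Hh updE eqxx.
have E2 : \sum_a G a * h (a l) a + \sum_a G a * h (a l) a = c * \sum_a G a.
  rewrite {2}E1 -big_split mulr_sumr; apply: eq_bigr => a _.
  rewrite /= -mulrDr; case: (eqVneq (G a) 0) => [->|HGa]; first by rewrite !mul0r mulr0.
  rewrite mulrC; congr (_ * _).
  by case: (a l) => /=; rewrite ?(Hc _ HGa) // addrC (Hc _ HGa).
have -> : c / 2%:R * \sum_a G a = (c * \sum_a G a) / 2%:R by rewrite mulrAC.
by rewrite -E2 -mulr2n -(mulr_natr (\sum_a G a * h (a l) a)) mulfK // pnatr_eq0.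
Qed.

Lemma iter (s : seq V) (Psi : {ffun V -> bool} -> rat)
  (phi : V -> bool -> {ffun V -> bool} -> rat) (c : V -> rat) :
  uniq s ->
  (forall l, l \in s -> forall a b, Psi (upd a l b) = Psi a) ->
  (forall l l', l \in s -> l' \in s -> forall a b b', phi l' b (upd a l b') = phi l' b a) ->
  (forall l, l \in s -> forall a, Psi a != 0 -> phi l true a + phi l false a = c l) ->
  \sum_a Psi a * \prod_(l <- s) phi l (a l) a = \prod_(l <- s) (c l / 2%:R) * \sum_a Psi a.
Proof.
elim: s Psi => [|l s IH] Psi /= Hu HPsi Hphi Hc.
  by rewrite big_nil mul1r; apply: eq_bigr => a _; rewrite big_nil mulr1.
case/andP: Hu => Hls Hu.
have Hin : forall x, x \in s -> x \in l :: s by move=> x Hx; rewrite inE Hx orbT.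
transitivity (\sum_a (Psi a * \prod_(l' <- s) phi l' (a l') a) * phi l (a l) a).
  by apply: eq_bigr => a _; rewrite big_cons mulrCA mulrC.
rewrite (@step l (fun a => Psi a * \prod_(l' <- s) phi l' (a l') a) (phi l) (c l)).
- rewrite big_cons -[RHS]mulrA /=; congr (_ * _).
  apply: IH => //.
  + by move=> x Hx; apply: HPsi; apply: Hin.
  + by move=> x y Hx Hy; apply: Hphi; apply: Hin.
  + by move=> x Hx; apply: Hc; apply: Hin.
- move=> a b; rewrite HPsi ?mem_head //; congr (_ * _).
  apply: eq_big_seq => l' Hl'.
  have Hne : (l' == l) = false by apply/eqP => Heq; move: Hls; rewrite -Heq Hl'.
  by rewrite updE Hne Hphi ?mem_head ?Hin.
- by move=> a b b'; rewrite Hphi ?mem_head.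
- move=> a HG; apply: Hc; first exact: mem_head.
  by move: HG; apply: contra => /eqP ->; rewrite mul0r.
Qed.

End A.
Section B.
Variables (V : finType) (m : nat) (E : 'I_m -> rel V) (t : 'I_m -> V) (S : {set V * bool}).
Local Open Scope ring_scope.

Definition Lv : {set V} := [set v | [exists i, exists j, pseudo E t i j v]].
Definition clausesOf v (a : {ffun V -> bool}) :=
  [forall i, forall j, pseudo E t i j v ==> [exists w in Cvars E t i j, a w]].
Definition forced v (a : {ffun V -> bool}) :=
  [exists i, exists j, pseudo E t i j v && [forall w in Cvars E t i j, (w != v) ==> ~~ a w]].
Definition compat v b := (v, ~~ b) \notin S.
Definition phi v b a : rat := (if compat v b then 1 else 0) *
  (if v \in Lv then (if clausesOf v (upd a v b) then (if b && forced v a then 1 else 2%:R^-1) else 0)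
   else 2%:R^-1).
Definition cc v : rat := if [exists b, (v, b) \in S :\: Fix E t S] then 2%:R^-1 else 1.

Lemma forced_L v (a : {ffun V -> bool}) : forced v a -> v \in Lv.
Proof.
case/existsP => i /existsP [j /andP [Hp _]].
by rewrite inE; apply/existsP; exists i; apply/existsP; exists j.
Qed.

Lemma pseudo_L i j v : pseudo E t i j v -> v \in Lv.
Proof. by move=> Hp; rewrite inE; apply/existsP; exists i; apply/existsP; exists j. Qed.

Lemma Fix_lits (a : {ffun V -> bool}) v : ((v, true) \in Fix E t (lits a)) = a v && forced v a.
Proof.
rewrite /Fix inE /= inE /= eqb_id; congr (_ && _).
apply: eq_existsb => i; apply: eq_existsb => j; congr (_ && _).
by apply: eq_forallb => w; rewrite [(w, false) \in _]inE /= eqbF_neg.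
Qed.

Lemma prod_if (P : pred V) (x : rat) :
  \prod_v (if P v then 1 else x) = x ^+ #|[set v | ~~ P v]|.
Proof.
rewrite -(@prodr_const _ V (mem [set v | ~~ P v]) x) [RHS]big_mkcond; apply: eq_bigr => v _.
by rewrite inE; case: (P v).
Qed.

Lemma upd_id (a : {ffun V -> bool}) v : upd a v (a v) = a.
Proof. by apply/ffunP => x; rewrite updE; case: eqP => // ->. Qed.

Lemma pointwise a :
  (if sat E t a && (S \subset lits a) then weight E t a else 0) = \prod_v phi v (a v) a.
Proof.
case HS: (S \subset lits a); last first.
  move/negbT: HS => /subsetPn [[v b] HvS]; rewrite inE /= => Hab.
  have Hb : b = ~~ a v by move: Hab; case: b HvS => _; case: (a v).
  rewrite andbF; apply/esym/eqP/prodf_eq0; exists v => //.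
  by rewrite /phi /compat -Hb HvS /= mul0r.
case Hsat: (sat E t a); last first.
  move/negbT: Hsat; rewrite /sat => /forallPn [i /forallPn [j /forallPn [l]]].
  rewrite negb_imply => /andP [Hp Hn].
  apply/esym/eqP/prodf_eq0; exists l => //.
  rewrite /phi (pseudo_L Hp) upd_id.
  have -> : clausesOf l a = false.
    apply/negP => /forallP /(_ i) /forallP /(_ j) /implyP /(_ Hp) Hc.
    by move: Hn; rewrite Hc.
  by rewrite mulr0.
rewrite /weight -prod_if; apply: eq_bigr => v _.
rewrite /phi upd_id Fix_lits.
have -> : compat v (a v).
  rewrite /compat; apply/negP => Hin.
  by move/subsetP: HS => /(_ _ Hin); rewrite inE /= => /eqP; case: (a v).
rewrite mul1r.
case HL: (v \in Lv); last first.
  case Hf: (forced v a); last by rewrite andbF.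
  by rewrite (forced_L Hf) in HL.
have -> : clausesOf v a.
  apply/forallP => i; apply/forallP => j; apply/implyP => Hp.
  by move/forallP: Hsat => /(_ i) /forallP /(_ j) /forallP /(_ v) /implyP /(_ Hp).
by [].
Qed.

Lemma clauses_true l (a : {ffun V -> bool}) : (forall i j, pseudo E t i j l -> l \in Cvars E t i j) ->
  clausesOf l (upd a l true).
Proof.
move=> HC; apply/forallP => i; apply/forallP => j; apply/implyP => Hp.
by apply/existsP; exists l; rewrite HC // updE eqxx.
Qed.

Lemma clauses_false l (a : {ffun V -> bool}) : clausesOf l (upd a l false) = ~~ forced l a.
Proof.
apply/idP/idP.
  move=> /forallP Hc; apply/negP => /existsP [i /existsP [j /andP [Hp /forallP Hf]]].
  move: (Hc i) => /forallP /(_ j) /implyP /(_ Hp) /existsP [w /andP [Hw]].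
  rewrite updE; case: eqP => // /eqP Hwl Haw.
  by move: (Hf w); rewrite Hw Hwl Haw.
move=> Hnf; apply/forallP => i; apply/forallP => j; apply/implyP => Hp.
case Hex: [exists w in Cvars E t i j, upd a l false w] => //.
exfalso; apply: (negP Hnf).
apply/existsP; exists i; apply/existsP; exists j; rewrite Hp /=.
apply/forallP => w; apply/implyP => Hw; apply/implyP => Hwl.
apply/negP => Haw.
have : [exists w in Cvars E t i j, upd a l false w].
  by apply/existsP; exists w; rewrite Hw updE (negbTE Hwl) Haw.
by rewrite Hex.
Qed.

Lemma cc_eq v : cc v = if (((v, true) \in S) && ((v, true) \notin Fix E t S)) || ((v, false) \in S)
  then 2%:R^-1 else 1.
Proof.
rewrite /cc; congr (if _ then _ else _).
apply/existsP/idP.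
  case=> [[]]; rewrite in_setD => /andP [H1 H2]; first by rewrite H1 H2.
  by rewrite H2 orbT.
case/orP => [/andP [H1 H2] | H]; first by exists true; rewrite in_setD H1 H2.
exists false; rewrite in_setD H andbT.
by rewrite /Fix inE.
Qed.

Lemma Fix_L v b : (v, b) \in Fix E t S -> v \in Lv.
Proof.
rewrite /Fix inE => /and3P [_ _ /existsP [i /existsP [j /andP [Hp _]]]].
exact: pseudo_L Hp.
Qed.

Lemma phi_nonleaf v b (a : {ffun V -> bool}) : v \notin Lv -> phi v b a = (if compat v b then 1 else 0) * 2%:R^-1.
Proof. by move=> Hv; rewrite /phi (negbTE Hv). Qed.

Hypothesis HB : binary_tree_based E t.
Hypothesis Hcons : consistent S.
Hypothesis Hguard : guarded E t S.

Lemma Cvars_notL i j l w : pseudo E t i j l -> w \in Cvars E t i j -> w != l -> w \notin Lv.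
Proof.
move=> Hp Hw Hwl; rewrite inE; apply/negP => /existsP [k /existsP [k' Hk]].
by move: (Cvars_nonleaf HB k k' Hp Hw Hwl); rewrite Hk.
Qed.

Lemma nonleaf_c v (a : {ffun V -> bool}) : v \notin Lv -> phi v true a + phi v false a = cc v.
Proof.
move=> Hv; rewrite !phi_nonleaf // cc_eq /compat /=.
have HF : (v, true) \notin Fix E t S by apply/negP => /Fix_L; rewrite (negbTE Hv).
rewrite HF andbT.
have := Hcons v.
by case: ((v, true) \in S); case: ((v, false) \in S); rewrite //= ?mul1r ?mul0r ?add0r ?addr0.
Qed.

Section Agree.
Variable a : {ffun V -> bool}.
Hypothesis Hag : forall v, v \notin Lv -> compat v (a v).

Lemma agree_true v : v \notin Lv -> (v, true) \in S -> a v.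
Proof. by move=> /Hag; rewrite /compat; case: (a v) => //= /negbTE ->. Qed.

Lemma agree_false v : v \notin Lv -> (v, false) \in S -> ~~ a v.
Proof. by move=> /Hag; rewrite /compat; case: (a v) => //= /negbTE ->. Qed.

Lemma forced_guard l : forced l a ->
  (((l, true) \notin S) && ((l, false) \notin S)) || ((l, true) \in Fix E t S).
Proof.
case/existsP => i /existsP [j /andP [Hp /forallP Hf]].
case/or3P: (Hguard Hp) => [-> // | /existsP [v /and3P [Hv Hvl HvS]] | /andP [Hl Hall]].
- have := agree_true (Cvars_notL Hp Hv Hvl) HvS.
  by move: (Hf v); rewrite Hv Hvl /= => /negbTE ->.
- apply/orP; right; rewrite /Fix inE /= Hl /=.
  by apply/existsP; exists i; apply/existsP; exists j; rewrite Hp.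
Qed.

Lemma Fix_forced l : (l, true) \in Fix E t S -> forced l a.
Proof.
rewrite /Fix inE /= => /andP [_ /existsP [i /existsP [j /andP [Hp /forallP Hall]]]].
apply/existsP; exists i; apply/existsP; exists j; rewrite Hp /=.
apply/forallP => w; apply/implyP => Hw; apply/implyP => Hwl.
apply: agree_false; first exact: Cvars_notL Hp Hw Hwl.
by move: (Hall w); rewrite Hw Hwl.
Qed.

Lemma leaf_c l : l \in Lv -> phi l true a + phi l false a = cc l.
Proof.
move=> Hl; rewrite /phi Hl clauses_false clauses_true; last first.
  by move=> i j; apply: pseudo_Cvars.
rewrite cc_eq /compat /=.
have Hc := Hcons l.
case Ht: ((l, true) \in S); case Hf: ((l, false) \in S); rewrite ?Ht ?Hf //= in Hc *.
- have -> : forced l a = ((l, true) \in Fix E t S).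
    apply/idP/idP; last exact: Fix_forced.
    by move=> Hfo; move: (forced_guard Hfo); rewrite Ht.
  by case: ((l, true) \in Fix E t S); rewrite /= ?mul1r ?mul0r ?addr0.
- have -> : forced l a = false.
    apply/negbTE/negP => Hfo; move: (forced_guard Hfo); rewrite Hf andbF /=.
    by rewrite /Fix inE /= Ht.
  by rewrite !mul0r !mul1r add0r.
- by case: (forced l a); rewrite /= !mul1r ?addr0 ?add0r.
Qed.

End Agree.
End B.
Section C.
Variables (V : finType) (m : nat) (E : 'I_m -> rel V) (t : 'I_m -> V) (S : {set V * bool}).
Local Open Scope ring_scope.
Hypothesis HB : binary_tree_based E t.
Hypothesis Hcons : consistent S.
Hypothesis Hguard : guarded E t S.

Lemma clauses_ext v (a1 a2 : {ffun V -> bool}) :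
  (forall i j w, pseudo E t i j v -> w \in Cvars E t i j -> a1 w = a2 w) ->
  clausesOf E t v a1 = clausesOf E t v a2.
Proof.
move=> H; apply: eq_forallb => i; apply: eq_forallb => j.
case Hp: (pseudo E t i j v) => //=.
apply: eq_existsb => w; case Hw: (w \in Cvars E t i j) => //=.
by rewrite (H i j w).
Qed.

Lemma forced_ext v (a1 a2 : {ffun V -> bool}) :
  (forall i j w, pseudo E t i j v -> w \in Cvars E t i j -> w != v -> a1 w = a2 w) ->
  forced E t v a1 = forced E t v a2.
Proof.
move=> H; apply: eq_existsb => i; apply: eq_existsb => j.
case Hp: (pseudo E t i j v) => //=.
apply: eq_forallb => w; case Hw: (w \in Cvars E t i j) => //=.
case Hwv: (w != v) => //=.
by rewrite (H i j w).
Qed.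

Lemma phi_inv l l' (a : {ffun V -> bool}) b b' : l \in Lv E t -> l' \in Lv E t ->
  phi E t S l' b (upd a l b') = phi E t S l' b a.
Proof.
move=> Hl Hl'; rewrite /phi Hl'; congr (_ * _).
have K : forall i j w, pseudo E t i j l' -> w \in Cvars E t i j -> w != l' -> (w == l) = false.
  move=> i j w Hp Hw Hwl; apply/eqP => Heq.
  by move: (Cvars_notL HB Hp Hw Hwl); rewrite Heq Hl.
rewrite (@clauses_ext l' (upd (upd a l b') l' b) (upd a l' b)); last first.
  move=> i j w Hp Hw; rewrite !updE; case: (eqVneq w l') => // Hwl.
  by rewrite (K i j w).
rewrite (@forced_ext l' (upd a l b') a) //.
by move=> i j w Hp Hw Hwl; rewrite updE (K i j w).
Qed.

Lemma prod_split (F : V -> rat) (A : {set V}) :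
  \prod_(v <- enum A) F v * \prod_(v <- enum (~: A)) F v = \prod_v F v.
Proof.
rewrite !big_enum /= [RHS](bigID (mem A)) /=.
by congr (_ * _); apply: eq_bigl => v; rewrite !inE.
Qed.

End C.

Local Open Scope ring_scope.

Theorem lemma14 (V : finType) (m : nat) (E : 'I_m -> rel V) (t : 'I_m -> V)
  (S : {set V * bool}) :
  binary_tree_based E t -> consistent S -> guarded E t S ->
  PrEC E t S = (2%:R^-1) ^+ #|S :\: Fix E t S|.
Proof.
move=> HB Hcons Hguard.
rewrite /PrEC big_mkcond /=.
under eq_bigr => a _ do rewrite pointwise -(prod_split _ (Lv E t)) mulrC.
set L := Lv E t.
rewrite (@iter _ (enum L) (fun a => \prod_(v <- enum (~: L)) phi E t S v (a v) a)
   (phi E t S) (cc E t S)).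
- have -> : \sum_(a : {ffun V -> bool}) \prod_(v <- enum (~: L)) phi E t S v (a v) a
      = \prod_(v <- enum (~: L)) (cc E t S v / 2%:R) * \sum_(a : {ffun V -> bool}) (1 : rat).
    transitivity (\sum_(a : {ffun V -> bool}) 1 * \prod_(v <- enum (~: L)) phi E t S v (a v) a).
      by apply: eq_bigr => a _; rewrite mul1r.
    apply: iter; first exact: enum_uniq.
    + by [].
    + move=> l l'; rewrite !mem_enum !in_setC => Hl Hl' a b b'.
      by rewrite !phi_nonleaf.
    + move=> l; rewrite mem_enum in_setC => Hl a _.
      exact: nonleaf_c.
  rewrite mulrA prod_split sumr_const card_ffun card_bool big_split /= prodr_const.
  rewrite -mulrA natrX -exprMn mulVf ?pnatr_eq0 // expr1n mulr1.
  have -> : \prod_i cc E t S i = \prod_i (if ~~ [exists b, (i, b) \in S :\: Fix E t S] then 1 else 2%:R^-1).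
    by apply: eq_bigr => v _; rewrite /cc [in RHS]if_neg.
  rewrite prod_if; congr (_ ^+ _).
  have Hinj : {in S :\: Fix E t S &, injective (@fst V bool)}.
    move=> [v b] [v' b'] /setDP [H1 _] /setDP [H2 _] /= Hvv; subst v'.
    case: b H1 => H1; case: b' H2 => H2 //; by move: (Hcons v); rewrite H1 H2.
  rewrite -(card_in_imset Hinj); apply: eq_card => v; rewrite !inE negbK.
  apply/existsP/imsetP.
  - by case=> b Hb; exists (v, b).
  - by case=> [[v' b] Hx ->]; exists b.
- exact: enum_uniq.
- move=> l; rewrite mem_enum => Hl a b.
  apply: eq_big_seq => v; rewrite mem_enum in_setC => Hv.
  have Hvl : (v == l) = false by apply/eqP => Heq; move: Hv; rewrite Heq Hl.
  by rewrite updE Hvl !phi_nonleaf.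
- by move=> l l'; rewrite !mem_enum => Hl Hl' a b b'; apply: phi_inv.
- move=> l; rewrite mem_enum => Hl a HPsi.
  apply: leaf_c => // v Hv.
  case Hc: (compat S v (a v)) => //; exfalso.
  move/eqP: HPsi; apply; apply/eqP; rewrite prodf_seq_eq0; apply/hasP.
  exists v; first by rewrite mem_enum in_setC.
  by rewrite phi_nonleaf // Hc mul0r.
Qed.
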